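(* Let $A,B\in\mathrm{SL}_2\mathbb{R}$ be noncommuting, with $\mathrm{tr}(A)=\mathrm{tr}(B)\ge2$, and assume that the pair $A,B$ is well oriented. Then the only optimal word is $ab$.
   Context: For a matrix $X$ of trace $\ge2$, $X\ne I$, its attracting/repelling fixed points in $\partial\mathcal{H}=\mathbb{P}^1\mathbb{R}$ (under the Möbius action) are denoted with $+$/$-$ superscripts ($\alpha^\pm$ for $A$, $\beta^\pm$ for $B$); if $X$ is parabolic both denote its unique fixed point. Coherent orientation: with $\partial\mathcal{H}$ cyclically ordered and $[\alpha,\beta]$ the closed counterclockwise interval from $\alpha$ to $\beta$, let $I^+=\{\alpha^+\}$ if $\alpha^+=\beta^+$, and otherwise the one of $[\alpha^+,\beta^+],[\beta^+,\alpha^+]$ mapped into itself by both $A$ and $B$ (if it exists); define $I^-$ likewise with $A^{-1},B^{-1},\alpha^-,\beta^-$; the pair $A,B$ is coherently oriented if both exist. The pair $A,B$ is well oriented if $A,B$ is coherently oriented but $A,B^{-1}$ is not. Words: $F_2^+$ is the free semigroup of nonempty words over $\{a,b\}$, $|w|$ the length, $\phi(a)=A,\phi(b)=B$, $[w]=\mathrm{tr}(\phi(w))$. Define $w\preceq u$ iff $[w^{|u|}]\le[u^{|w|}]$; $w$ is maximal if $u\preceq w$ for all $u$. A Lyndon word is one strictly smaller lexicographically ($a<b$) than each of its proper rotations. A complete set of optimal words is a set of pairwise distinct maximal Lyndon words such that every maximal word is a power of a rotation of one of them; it is unique if it exists, and its elements are the optimal words. *)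

(* Defs.v *)
From HB Require Import structures.
From mathcomp Require Import all_boot all_order all_algebra.
From mathcomp Require Import reals.
Set Implicit Arguments. Unset Strict Implicit. Unset Printing Implicit Defensive.
Import Order.TTheory GRing.Theory Num.Theory.
Local Open Scope ring_scope.

Section Defs.
Variable R : realType.

(* ---------- Projective line  P^1 R = R u {oo}:  Some x = [x:1], None = oo = [1:0] ---------- *)
Definition P1 := option R.

Definition p1vec (p : P1) : 'cV[R]_2 :=
  match p with
  | Some x => \col_i (if i == 0 then x else 1)
  | None => \col_i (if i == 0 then 1 else 0)
  end.

Definition mob (X : 'M[R]_2) (p : P1) : P1 :=
  let a := X 0 0 in let b := X 0 1 in let c := X 1 0 in let d := X 1 1 in
  match p with
  | Some x => if c * x + d == 0 then None else Some ((a * x + b) / (c * x + d))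
  | None => if c == 0 then None else Some (a / c)
  end.

(* p is the attracting fixed point of X (tr X >= 2, X <> I): the projectivized
   eigenvector for the eigenvalue >= 1 (for parabolic X this is its unique
   fixed point, eigenvalue 1). *)
Definition attr_fix (X : 'M[R]_2) (p : P1) : Prop :=
  exists l : R, 1 <= l /\ X *m p1vec p = l *: p1vec p.

Definition rep_fix (X : 'M[R]_2) (p : P1) : Prop :=
  exists l : R, 0 < l <= 1 /\ X *m p1vec p = l *: p1vec p.

(* closed counterclockwise interval [p, q] of P^1 R (orientation: increasing
   direction on R, passing through oo) *)
Definition ccint (p q : P1) : P1 -> bool :=
  match p, q with
  | Some x, Some y =>
      if x <= y then (fun z => match z with Some t => x <= t <= y | None => false end)
      else (fun z => match z with Some t => (x <= t) || (t <= y) | None => true end)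
  | None, Some y => fun z => match z with Some t => t <= y | None => true end
  | Some x, None => fun z => match z with Some t => x <= t | None => true end
  | None, None => fun z => z == None
  end.

Definition maps_into_itself (X : 'M[R]_2) (J : P1 -> bool) : Prop :=
  forall z, J z -> J (mob X z).

Definition I_exists (X Y : 'M[R]_2) (p q : P1) : Prop :=
  p = q \/
  (exists J, (J = ccint p q \/ J = ccint q p) /\
             maps_into_itself X J /\ maps_into_itself Y J).

Definition coherently_oriented (X Y : 'M[R]_2) : Prop :=
  (exists p q, attr_fix X p /\ attr_fix Y q /\ I_exists X Y p q) /\
  (exists p q, rep_fix X p /\ rep_fix Y q /\ I_exists (invmx X) (invmx Y) p q).

Definition well_oriented (A B : 'M[R]_2) : Prop :=
  coherently_oriented A B /\ ~ coherently_oriented A (invmx B).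

Definition word := seq bool.
Definition la : bool := false.
Definition lb : bool := true.

Definition phi (A B : 'M[R]_2) (w : word) : 'M[R]_2 :=
  foldr (fun l M => (if l then B else A) *m M) 1%:M w.

Definition wtr (A B : 'M[R]_2) (w : word) : R := \tr (phi A B w).

Definition wpow (w : word) (k : nat) : word := flatten (nseq k w).

Definition wle (A B : 'M[R]_2) (w u : word) : Prop :=
  wtr A B (wpow w (size u)) <= wtr A B (wpow u (size w)).

Definition maximal (A B : 'M[R]_2) (w : word) : Prop :=
  w <> [::] /\ forall u : word, u <> [::] -> wle A B u w.

End Defs.

Fixpoint lex_lt (s t : word) : bool :=
  match s, t with
  | [::], [::] => false
  | [::], _ :: _ => true
  | _ :: _, [::] => false
  | x :: s', y :: t' => (~~ x && y) || ((x == y) && lex_lt s' t')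
  end.

Definition lyndon (w : word) : Prop :=
  w <> [::] /\ forall k, (0 < k < size w)%N -> lex_lt w (rot k w).

(* S is a complete set of optimal words (as a set, pairwise distinctness is automatic) *)
Definition complete_optimal (R : realType) (A B : 'M[R]_2) (S : word -> Prop) : Prop :=
  (forall w, S w -> maximal A B w /\ lyndon w) /\
  (forall w, maximal A B w ->
     exists u r k, S u /\ (0 < k)%N /\ w = wpow (rot r u) k).

(* Main.v *)
Require Import Defs.
From HB Require Import structures.
From mathcomp Require Import all_boot all_order all_algebra.
From mathcomp Require Import reals.
From mathcomp Require Import ring lra zify.
Import Order.TTheory GRing.Theory Num.Theory.
Local Open Scope ring_scope.
Set Implicit Arguments. Unset Strict Implicit. Unset Printing Implicit Defensive.

Section S.
Variable R : realType.
Implicit Types (M N X A B C : 'M[R]_2).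

Lemma ord2P (i : 'I_2) : i = 0 \/ i = 1.
Proof. case: i => [[|[|k]] Hk]; [left|right|by []]; exact/val_inj. Qed.
Lemma lift01 : lift ord0 (ord0 : 'I_1) = 1 :> 'I_2. Proof. exact/val_inj. Qed.
Lemma ord0E : ord0 = 0 :> 'I_2. Proof. exact/val_inj. Qed.
Lemma lift10 : lift (0 : 'I_2) (0 : 'I_1) = 1 :> 'I_2. Proof. exact/val_inj. Qed.
Lemma lift11 : lift (1 : 'I_2) (0 : 'I_1) = 0 :> 'I_2. Proof. exact/val_inj. Qed.

Lemma mx2E M N : M 0 0 = N 0 0 -> M 0 1 = N 0 1 -> M 1 0 = N 1 0 -> M 1 1 = N 1 1 -> M = N.
Proof.
move=> h1 h2 h3 h4; apply/matrixP=> i j.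
by case: (ord2P i) => ->; case: (ord2P j) => ->.
Qed.

Lemma mul2E m n (M : 'M[R]_(m,2)) (N : 'M[R]_(2,n)) i j : (M *m N) i j = M i 0 * N 0 j + M i 1 * N 1 j.
Proof. by rewrite !mxE !big_ord_recl big_ord0 addr0 lift01 ord0E. Qed.

Lemma tr2 M : \tr M = M 0 0 + M 1 1.
Proof. by rewrite /mxtrace !big_ord_recl big_ord0 addr0 lift01 ord0E. Qed.

Lemma det2 M : \det M = M 0 0 * M 1 1 - M 0 1 * M 1 0.
Proof.
rewrite (expand_det_row _ 0) !big_ord_recl big_ord0 addr0 /cofactor !det_mx11 !mxE /=.
rewrite lift01 !ord0E (_ : lift _ _ = 0 :> 'I_2); last exact/val_inj.
rewrite /bump /=; ring.
Qed.

Definition inv2m M : 'M[R]_2 := \matrix_(i,j) (if i == 0 then (if j == 0 then M 1 1 else - M 0 1) else (if j == 0 then - M 1 0 else M 0 0)).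

Lemma inv2 M : \det M = 1 -> invmx M = inv2m M.
Proof.
move=> dM; rewrite det2 in dM.
have h : M *m inv2m M = 1%:M.
  by apply: mx2E; rewrite !mul2E !mxE /=; lra.
have uM := (mulmx1_unit h).1.
by rewrite -[RHS](mulKmx uM) h mulmx1.
Qed.

Lemma one2E i j : (1%:M : 'M[R]_2) i j = (i == j)%:R.
Proof. by rewrite mxE. Qed.

Definition mv M (u : R * R) : R * R := (M 0 0 * u.1 + M 0 1 * u.2, M 1 0 * u.1 + M 1 1 * u.2).
Definition D (u w : R * R) : R := u.1 * w.2 - u.2 * w.1.
Definition sc (c : R) (u : R * R) : R * R := (c * u.1, c * u.2).
Definition ev M u l := mv M u = sc l u.

Lemma mv_mul M N u : mv (M *m N) u = mv M (mv N u).
Proof. rewrite /mv !mul2E /=; congr pair; ring. Qed.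
Lemma mv_sc M c u : mv M (sc c u) = sc c (mv M u).
Proof. rewrite /mv /sc /=; congr pair; ring. Qed.
Lemma D_scl c u w : D (sc c u) w = c * D u w. Proof. rewrite /D /=; ring. Qed.
Lemma D_scr c u w : D u (sc c w) = c * D u w. Proof. rewrite /D /=; ring. Qed.
Lemma D_det M u w : D (mv M u) (mv M w) = \det M * D u w.
Proof. rewrite det2 /D /mv /=; ring. Qed.
Lemma D_tr M u w : \tr M * D u w = D (mv M u) w + D u (mv M w).
Proof. rewrite tr2 /D /mv /=; ring. Qed.
Lemma D_decl M u v w w' : D v w * D (mv M u) w' = D u w * D (mv M v) w' + D v u * D (mv M w) w'.
Proof. rewrite /D /mv /=; ring. Qed.
Lemma D_decr M u v w w' : D v w * D w' (mv M u) = D u w * D w' (mv M v) + D v u * D w' (mv M w).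
Proof. rewrite /D /mv /=; ring. Qed.
Lemma D_anti u w : D u w = - D w u. Proof. rewrite /D; ring. Qed.
Lemma vec_dec (u v w : R * R) : D v w != 0 ->
  u = (D u w / D v w * v.1 + D v u / D v w * w.1, D u w / D v w * v.2 + D v u / D v w * w.2).
Proof.
move=> h; case: u => u1 u2; congr pair; rewrite /D /=; field; exact: h.
Qed.

Lemma D_eigl M v l x : \det M = 1 -> l != 0 -> ev M v l -> D v (mv M x) = D v x / l.
Proof.
move=> dM l0 e; apply: (mulfI l0); rewrite -D_scl -e D_det dM mul1r.
by rewrite mulrC divfK.
Qed.
Lemma D_eigr M v l x : \det M = 1 -> l != 0 -> ev M v l -> D (mv M x) v = D x v / l.
Proof.
move=> dM l0 e; rewrite D_anti (D_eigl x dM l0 e) [D x v]D_anti; ring.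
Qed.

Definition pv (p : P1 R) : R * R := match p with Some x => (x, 1) | None => (1, 0) end.

Lemma p1vecE p i : p1vec p i 0 = if i == 0 then (pv p).1 else (pv p).2.
Proof. by case: p => [x|]; rewrite mxE. Qed.

Lemma fix_ev X p l : (X *m p1vec p = l *: p1vec p) <-> ev X (pv p) l.
Proof.
split.
  move=> h; have h0 := congr1 (fun Y : 'cV[R]_2 => Y 0 0) h; have h1 := congr1 (fun Y : 'cV[R]_2 => Y 1 0) h.
  move: h0 h1; rewrite /= !mul2E !mxE !p1vecE /= => h0 h1.
  by rewrite /ev /mv /sc h0 h1.
case=> h0 h1; apply/matrixP => i j; rewrite (ord1 j) mul2E !mxE !p1vecE /=.
by case: (ord2P i) => ->.
Qed.

Lemma pv_D p q : D (pv p) (pv q) = 0 -> p = q.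
Proof.
case: p => [x|]; case: q => [y|] //=; rewrite /D /= => h.
- congr Some; lra.
- exfalso; lra.
- exfalso; lra.
Qed.

Lemma pv_nz p : D (pv p) (- (pv p).2, (pv p).1) > 0.
Proof. by case: p => [x|]; rewrite /D /=; nra. Qed.

Lemma ccintE p q z : p != q ->
  ccint p q z = (D (pv p) (pv q) * D (pv p) (pv z) * D (pv z) (pv q) <= 0).
Proof.
case: p => [x|]; case: q => [y|] //= hpq; rewrite /D /=.
- have hxy : x != y by apply: contra hpq => /eqP ->.
  case: ifP => hle.
    have hlt : x < y by rewrite lt_neqAle hxy hle.
    case: z => [t|] /=.
      have -> : (x * 1 - 1 * y) * (x * 1 - 1 * t) * (t * 1 - 1 * y) = - ((y - x) * ((t - x) * (y - t))) by ring.
      rewrite oppr_le0 pmulr_rge0 ?subr_gt0 //.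
      apply/idP/idP.
        by case/andP => h1 h2; apply: mulr_ge0; lra.
      move=> h; apply/andP; split; nra.
    apply/esym/negbTE; rewrite -ltNge; nra.
  have hlt : y < x by rewrite ltNge hle.
  case: z => [t|] /=.
    have -> : (x * 1 - 1 * y) * (x * 1 - 1 * t) * (t * 1 - 1 * y) = (x - y) * ((x - t) * (t - y)) by ring.
    rewrite pmulr_rle0 ?subr_gt0 //.
    apply/idP/idP.
      case/orP => h.
        by apply: mulr_le0_ge0; lra.
      by apply: mulr_ge0_le0; lra.
    move=> h; case: (lerP x t) => //= h2.
    nra.
  symmetry; apply/idP; nra.
- case: z => [t|] /=.
    apply/idP/idP => h; nra.
  symmetry; apply/idP; nra.
- case: z => [t|] /=.
    apply/idP/idP => h; nra.
  symmetry; apply/idP; nra.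
Qed.

Lemma mobE X z : \det X != 0 -> exists c, c != 0 /\ pv (mob X z) = sc c (mv X (pv z)).
Proof.
rewrite det2 => dX; case: z => [x|] /=.
  case: eqP => h /=.
    have a0 : X 0 0 * x + X 0 1 != 0.
      apply: contra dX => /eqP h2; apply/eqP.
      have -> : X 1 1 = - (X 1 0 * x) by lra.
      have -> : X 0 1 = - (X 0 0 * x) by lra.
      ring.
    exists (X 0 0 * x + X 0 1)^-1; split; first by rewrite invr_eq0.
    rewrite /sc /mv /= !mulr1 h mulr0 mulVf //.
  have b0 : X 1 0 * x + X 1 1 != 0 by apply/eqP.
  exists (X 1 0 * x + X 1 1)^-1; split; first by rewrite invr_eq0.
  rewrite /sc /mv /= !mulr1 mulVf // mulrC //.
case: eqP => h /=.
  have a0 : X 0 0 != 0.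
    apply: contra dX => /eqP h2; apply/eqP; rewrite h h2; ring.
  exists (X 0 0)^-1; split; first by rewrite invr_eq0.
  by rewrite /sc /mv /= !mulr1 !mulr0 !addr0 h mulVf // mulr0.
have b0 : X 1 0 != 0 by apply/eqP.
exists (X 1 0)^-1; split; first by rewrite invr_eq0.
rewrite /sc /mv /= !mulr1 !mulr0 !addr0 mulVf // mulrC //.
Qed.

Lemma Lcoh A C p q l : \det A = 1 -> \det C = 1 -> 0 < l ->
  ev A (pv p) l -> ev C (pv q) l -> 2 <= \tr (A *m C) -> I_exists A C p q.
Proof.
move=> dA dC l0 eA eC htr.
have ln0 : l != 0 by rewrite gt_eqF.
set v := pv p in eA *; set w := pv q in eC *.
case: (eqVneq (D v w) 0) => [/pv_D -> | dn0]; first by left.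
right.
have pq : p != q by apply: contra dn0 => /eqP e; rewrite /v /w e /D; apply/eqP; ring.
set d := D v w in dn0.
set k := D (mv A w) w / d.
set k' := D v (mv C v) / d.
have hA x : D v (mv A x) = D v x / l by exact: D_eigl.
have hC x : D (mv C x) w = D x w / l by exact: D_eigr.
have DAx x : D (mv A x) w = l * D x w + k * D v x.
  apply: (mulfI dn0); rewrite D_decl eA D_scl -/d /k; field; exact: dn0.
have DCx x : D v (mv C x) = l * D v x + k' * D x w.
  apply: (mulfI dn0); rewrite D_decr eC D_scr -/d /k'; field; exact: dn0.
have trAC : \tr (A *m C) = 2 + k * k'.
  apply: (mulfI dn0); rewrite [d * \tr _]mulrC /d D_tr !mv_mul DAx hC hA eC D_scr -/d /k' -/d; field.
  by rewrite dn0 ln0.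
have kk : 0 <= k * k' by lra.
pose sg : R := if (0 <= k) && (0 <= k') then 1 else -1.
have sg2 : sg * sg = 1 by rewrite /sg; case: ifP => _; ring.
have [sk sk'] : 0 <= sg * k /\ 0 <= sg * k'.
  rewrite /sg; case: ifP => [/andP[h1 h2]|/negbT]; first by rewrite !mul1r.
  rewrite negb_and -!ltNge => /orP[] h; split; nra.
pose J := if sg * d < 0 then ccint p q else ccint q p.
have JE z : J z = (0 <= sg * (D v (pv z) * D (pv z) w)).
  rewrite /J; case: ifP => hs.
    rewrite ccintE // -/v -/w -/d.
    have -> : d * D v (pv z) * D (pv z) w = (sg * d) * (sg * (D v (pv z) * D (pv z) w)).
      by rewrite -[LHS]mul1r -sg2; ring.
    by rewrite nmulr_rle0.
  have hs' : 0 < sg * d.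
    rewrite lt_neqAle; apply/andP; split; last by rewrite leNgt hs.
    rewrite eq_sym mulf_neq0 //; rewrite /sg; case: ifP => _; by rewrite ?oner_eq0 ?oppr_eq0 ?oner_eq0.
  rewrite ccintE 1?eq_sym // -/v -/w.
  have -> : D w v * D w (pv z) * D (pv z) v = - ((sg * d) * (sg * (D v (pv z) * D (pv z) w))).
    by rewrite -[LHS]mul1r -sg2 /d /D; ring.
  by rewrite oppr_le0 pmulr_rge0.
exists J; split; first by rewrite /J; case: ifP => _; [left|right].
split => z; rewrite !JE => hz.
  have [c [c0 ->]] := mobE z (eq_ind_r (fun x => x != 0) (oner_neq0 R) dA).
  rewrite D_scr D_scl hA DAx.
  set a := D v (pv z) in hz *; set b := D (pv z) w in hz *.
  have -> : sg * (c * (a / l) * (c * (l * b + k * a))) = (c * c) * (sg * (a * b) + (sg * k) * (a * a) / l).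
    by field.
  apply: mulr_ge0; first by nra.
  apply: addr_ge0 => //; apply: divr_ge0; [nra|lra].
have [c [c0 ->]] := mobE z (eq_ind_r (fun x => x != 0) (oner_neq0 R) dC).
rewrite D_scr D_scl hC DCx.
set a := D v (pv z) in hz *; set b := D (pv z) w in hz *.
have -> : sg * (c * (l * a + k' * b) * (c * (b / l))) = (c * c) * (sg * (a * b) + (sg * k') * (b * b) / l).
  by field.
apply: mulr_ge0; first by nra.
apply: addr_ge0 => //; apply: divr_ge0; [nra|lra].
Qed.

Lemma attr_ev X p : attr_fix X p -> exists l, 1 <= l /\ ev X (pv p) l.
Proof. by case=> l [h1 h2]; exists l; split => //; apply/fix_ev. Qed.
Lemma rep_ev X p : rep_fix X p -> exists l, 0 < l <= 1 /\ ev X (pv p) l.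
Proof. by case=> l [h1 h2]; exists l; split => //; apply/fix_ev. Qed.

Lemma tr_eig X p l : \det X = 1 -> l != 0 -> ev X (pv p) l -> \tr X = l + l^-1.
Proof.
move=> dX l0 e; have h := pv_nz p; set u' := (_, _) in h.
have hn : D (pv p) u' != 0 by rewrite gt_eqF.
apply: (mulIf hn); rewrite D_tr e D_scl (D_eigl _ dX l0 e); field; exact: l0.
Qed.

Lemma eq_l (l m : R) : 1 <= l -> 1 <= m -> l + l^-1 = m + m^-1 -> l = m.
Proof.
move=> hl hm e.
have h : (l - m) * (l * m - 1) = 0.
  have -> : (l - m) * (l * m - 1) = l * m * ((l + l^-1) - (m + m^-1)) by field; apply/andP; split; apply/eqP; lra.
  by rewrite e subrr mulr0.
move/eqP: h; rewrite mulf_eq0 => /orP[/eqP h|/eqP h]; first lra.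
have : l * m = 1 by lra.
nra.
Qed.

Lemma det_inv1 X : \det X = 1 -> \det (invmx X) = 1.
Proof. by move=> d; rewrite det_inv d invr1. Qed.

Lemma tr_inv X : \det X = 1 -> \tr (invmx X) = \tr X.
Proof. by move=> d; rewrite inv2 // !tr2 !mxE /=; ring. Qed.

Lemma ev_inv X u l : \det X = 1 -> l != 0 -> ev X u l -> ev (invmx X) u l^-1.
Proof.
move=> d l0; have d' := d; rewrite det2 in d'; rewrite /ev /mv /sc inv2 // !mxE /= => [[e1 e2]].
congr pair; apply: (mulfI l0).
  have -> : l * (X 1 1 * u.1 + - X 0 1 * u.2) = X 1 1 * (l * u.1) - X 0 1 * (l * u.2) by ring.
  rewrite -e1 -e2 mulrA mulfV // mul1r.
  transitivity ((X 0 0 * X 1 1 - X 0 1 * X 1 0) * u.1); first ring.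
  by rewrite d' mul1r.
have -> : l * (- X 1 0 * u.1 + X 0 0 * u.2) = X 0 0 * (l * u.2) - X 1 0 * (l * u.1) by ring.
rewrite -e1 -e2 mulrA mulfV // mul1r.
transitivity ((X 0 0 * X 1 1 - X 0 1 * X 1 0) * u.2); first ring.
by rewrite d' mul1r.
Qed.

Lemma tr_AiB A B : \det A = 1 -> \det B = 1 -> \tr (invmx A *m B) = \tr (A *m invmx B).
Proof. by move=> dA dB; rewrite !inv2 // !tr2 !mul2E !mxE /=; ring. Qed.

Lemma tr_ABi A B : \det B = 1 -> \tr (A *m B) + \tr (A *m invmx B) = \tr A * \tr B.
Proof. by move=> dB; rewrite !inv2 // !tr2 !mul2E !mxE /=; ring. Qed.

Lemma wo_tr A B : \det A = 1 -> \det B = 1 -> \tr A = \tr B ->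
  well_oriented A B -> \tr (A *m invmx B) < 2.
Proof.
move=> dA dB tAB [[[p1 [q1 [aA [aB _]]]] [p2 [q2 [rA [rB _]]]]] nco].
rewrite ltNge; apply/negP => h2; apply: nco.
have [l1 [hl1 eA]] := attr_ev aA.
have [l2 [hl2 eB]] := attr_ev aB.
have [m1 [hm1 eA']] := rep_ev rA.
have [m2 [hm2 eB']] := rep_ev rB.
have l10 : l1 != 0 by rewrite gt_eqF //; lra.
have l20 : l2 != 0 by rewrite gt_eqF //; lra.
have m10 : m1 != 0 by rewrite gt_eqF //; case/andP: hm1.
have m20 : m2 != 0 by rewrite gt_eqF //; case/andP: hm2.
have im1 : 1 <= m1^-1 by case/andP: hm1 => h h'; rewrite invf_ge1.
have im2 : 1 <= m2^-1 by case/andP: hm2 => h h'; rewrite invf_ge1.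
have eBi := ev_inv dB m20 eB'.
have eAi := ev_inv dA m10 eA'.
have eBi' := ev_inv dB l20 eB.
have tA1 := tr_eig dA l10 eA.
have tA2 := tr_eig dA m10 eA'.
have tB1 := tr_eig dB l20 eB.
have tB2 := tr_eig dB m20 eB'.
have e1 : l1 = m2^-1 by apply: eq_l => //; rewrite -tA1 invrK addrC -tB2.
have e2 : m1^-1 = l2 by apply: eq_l => //; rewrite invrK addrC -tA2 -tB1.
split.
  exists p1, q2; split => //; split; first by exists m2^-1; split => //; apply/fix_ev.
  apply: (Lcoh (l := l1)) => //; [exact: det_inv1 | lra | by rewrite e1].
exists p2, q1; split => //; split.
  exists l2^-1; split; last by apply/fix_ev.
  rewrite invr_gt0 invf_le1; lra.
rewrite invmxK; apply: (Lcoh (l := l2)) => //; [exact: det_inv1 | lra | by rewrite -e2 | by rewrite tr_AiB].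
Qed.

Definition A1m (l c : R) : 'M[R]_2 := \matrix_(i,j) if i == 0 then (if j == 0 then l else c) else (if j == 0 then 0 else l^-1).
Definition B1m (l c : R) : 'M[R]_2 := \matrix_(i,j) if i == 0 then (if j == 0 then l else 0) else (if j == 0 then c else l^-1).

Lemma evE X u l : ev X u l -> X 0 0 * u.1 + X 0 1 * u.2 = l * u.1 /\ X 1 0 * u.1 + X 1 1 * u.2 = l * u.2.
Proof. by rewrite /ev /mv /sc => [[-> ->]]. Qed.

Lemma nf A B p q l : \det A = 1 -> \det B = 1 -> 1 <= l ->
  ev A (pv p) l -> ev B (pv q) l^-1 -> (l + l^-1) ^+ 2 - 2 < \tr (A *m B) ->
  exists P c, P \in unitmx /\ 0 < c /\ A *m P = P *m A1m l c /\ B *m P = P *m B1m l c.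
Proof.
move=> dA dB hl eA eB htr.
have l0 : l != 0 by rewrite gt_eqF //; lra.
have li0 : l^-1 != 0 by rewrite invr_eq0.
set v := pv p in eA *; set w := pv q in eB *.
have dn0 : D v w != 0.
  apply/negP => /eqP /pv_D epq; move: eB; rewrite /w -epq -/v => eB.
  have h := pv_nz p; rewrite -/v in h; set u' := (_, _) in h.
  have hn : D v u' != 0 by rewrite gt_eqF.
  have : \tr (A *m B) = 2.
    apply: (mulIf hn); rewrite D_tr !mv_mul eB mv_sc eA D_scl (D_eigl _ dA l0 eA) (D_eigl _ dB li0 eB).
    rewrite D_scl; field; exact: l0.
  have : 2 <= l + l^-1.
    have : 0 <= (l - 1) ^+ 2 / l by apply: divr_ge0; [exact: sqr_ge0 | lra].
    have -> : (l - 1) ^+ 2 / l = l + l^-1 - 2 by field.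
    lra.
  nra.
set d := D v w in dn0.
set k := D (mv A w) w / d.
set k' := D v (mv B v) / d.
have hAw : mv A w = (k * v.1 + l^-1 * w.1, k * v.2 + l^-1 * w.2).
  rewrite {1}(vec_dec (mv A w) dn0) -/d (D_eigl _ dA l0 eA) /k -/d.
  congr pair; field; by rewrite dn0 l0.
have hBv : mv B v = (l * v.1 + k' * w.1, l * v.2 + k' * w.2).
  rewrite {1}(vec_dec (mv B v) dn0) -/d (D_eigr _ dB li0 eB) /k' -/d invrK.
  congr pair; field; exact: dn0.
have trAB : \tr (A *m B) = l ^+ 2 + l^-1 ^+ 2 + k * k'.
  apply: (mulIf dn0); rewrite D_tr !mv_mul.
  have h1 : d * D (mv A (mv B v)) w = d * (l ^+ 2 * d + k * k' * d).
    rewrite D_decl (D_eigr _ dB li0 eB) eA D_scl -/d /k /k' invrK; field; exact: dn0.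
  rewrite (mulfI dn0 h1) eB mv_sc D_scr (D_eigl _ dA l0 eA) -/d; field; exact: l0.
have kk : 0 < k * k'.
  move: htr; rewrite trAB.
  have -> : (l + l^-1) ^+ 2 = l ^+ 2 + l^-1 ^+ 2 + 2 by rewrite sqrrD mulfV //; ring.
  lra.
have k0 : k != 0 by apply: contraTneq kk => ->; rewrite mul0r ltxx.
pose c := Num.sqrt (k * k').
have c0 : 0 < c by rewrite sqrtr_gt0.
have cc : c * c = k * k' by rewrite -expr2 sqr_sqrtr // ltW.
pose b := c / k.
have bk : b * k = c by rewrite /b divfK.
have bc : b * c = k' by rewrite /b mulrAC cc mulrAC mulfV // mul1r.
have b0 : b != 0 by rewrite /b mulf_neq0 ?invr_eq0 // gt_eqF.
pose P : 'M[R]_2 := \matrix_(i,j) if j == 0 then (if i == 0 then v.1 else v.2) else b * (if i == 0 then w.1 else w.2).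
have [eA1 eA2] := evE eA.
have [eB1 eB2] := evE eB.
have [eAw1 eAw2] : A 0 0 * w.1 + A 0 1 * w.2 = k * v.1 + l^-1 * w.1 /\ A 1 0 * w.1 + A 1 1 * w.2 = k * v.2 + l^-1 * w.2.
  by move: hAw; rewrite /mv => [[-> ->]].
have [eBv1 eBv2] : B 0 0 * v.1 + B 0 1 * v.2 = l * v.1 + k' * w.1 /\ B 1 0 * v.1 + B 1 1 * v.2 = l * v.2 + k' * w.2.
  by move: hBv; rewrite /mv => [[-> ->]].
exists P, c; split.
  rewrite unitmxE det2 !mxE /= unitfE.
  have -> : v.1 * (b * w.2) - b * w.1 * v.2 = b * d by rewrite /d /D; ring.
  by rewrite mulf_neq0.
split => //; split; apply: mx2E; rewrite !mul2E !mxE /=.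
- by rewrite eA1; ring.
- transitivity (b * (A 0 0 * w.1 + A 0 1 * w.2)); first ring.
  by rewrite eAw1 -bk; ring.
- by rewrite eA2; ring.
- transitivity (b * (A 1 0 * w.1 + A 1 1 * w.2)); first ring.
  by rewrite eAw2 -bk; ring.
- by rewrite eBv1 -bc; ring.
- transitivity (b * (B 0 0 * w.1 + B 0 1 * w.2)); first ring.
  by rewrite eB1; ring.
- by rewrite eBv2 -bc; ring.
- transitivity (b * (B 1 0 * w.1 + B 1 1 * w.2)); first ring.
  by rewrite eB2; ring.
Qed.

Lemma eqle (x y : R) : x = y -> x <= y. Proof. by move->. Qed.

Definition F2 M := M 0 0 ^+ 2 + M 0 1 ^+ 2 + M 1 0 ^+ 2 + M 1 1 ^+ 2.
Definition bnd M (s : R) := forall x1 x2 : R,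
  (M 0 0 * x1 + M 0 1 * x2) ^+ 2 + (M 1 0 * x1 + M 1 1 * x2) ^+ 2 <= s * (x1 ^+ 2 + x2 ^+ 2).

Lemma bnd_mul M N s s' : 0 <= s -> bnd M s -> bnd N s' -> bnd (M *m N) (s * s').
Proof.
move=> s0 hM hN x1 x2; rewrite !mul2E.
set y1 := N 0 0 * x1 + N 0 1 * x2; set y2 := N 1 0 * x1 + N 1 1 * x2.
have -> : (M 0 0 * N 0 0 + M 0 1 * N 1 0) * x1 + (M 0 0 * N 0 1 + M 0 1 * N 1 1) * x2 = M 0 0 * y1 + M 0 1 * y2 by rewrite /y1 /y2; ring.
have -> : (M 1 0 * N 0 0 + M 1 1 * N 1 0) * x1 + (M 1 0 * N 0 1 + M 1 1 * N 1 1) * x2 = M 1 0 * y1 + M 1 1 * y2 by rewrite /y1 /y2; ring.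
apply: (le_trans (hM y1 y2)); rewrite -mulrA; apply: ler_wpM2l => //; exact: hN.
Qed.

Lemma bnd_le M s s' : s <= s' -> bnd M s -> bnd M s'.
Proof.
move=> ss h x1 x2; apply: (le_trans (h x1 x2)); apply: ler_wpM2r => //.
by apply: addr_ge0; apply: sqr_ge0.
Qed.

Lemma bnd1 : bnd 1%:M 1.
Proof. by move=> x1 x2; rewrite !one2E /= mul1r; apply: eqle; ring. Qed.

Lemma form_ge0 (a b c x y : R) : 0 <= a + c -> b ^+ 2 <= a * c -> 0 <= a * x ^+ 2 + 2 * b * x * y + c * y ^+ 2.
Proof.
move=> hac hb.
have e : (a + c) * (a * x ^+ 2 + 2 * b * x * y + c * y ^+ 2) = (a * x + b * y) ^+ 2 + (b * x + c * y) ^+ 2 + (a * c - b ^+ 2) * (x ^+ 2 + y ^+ 2) by ring.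
case: (ltrP 0 (a + c)) => h.
  have : 0 <= (a + c) * (a * x ^+ 2 + 2 * b * x * y + c * y ^+ 2).
    rewrite e; apply: addr_ge0; first by apply: addr_ge0; apply: sqr_ge0.
    by apply: mulr_ge0; [lra | apply: addr_ge0; apply: sqr_ge0].
  by rewrite pmulr_rge0.
have a0 : a = 0 by nra.
have c0 : c = 0 by nra.
have b0 : b = 0 by nra.
by rewrite a0 b0 c0; apply: eqle; ring.
Qed.

Lemma bnd_of_F M s : \det M = 1 -> 1 <= s -> F2 M <= s + s^-1 -> bnd M s.
Proof.
rewrite det2 /F2 => dM hs hF x1 x2.
have s0 : s != 0 by rewrite gt_eqF //; lra.
rewrite -subr_ge0.
set a := s - (M 0 0 ^+ 2 + M 1 0 ^+ 2); set c := s - (M 0 1 ^+ 2 + M 1 1 ^+ 2).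
set b := - (M 0 0 * M 0 1 + M 1 0 * M 1 1).
have -> : s * (x1 ^+ 2 + x2 ^+ 2) - ((M 0 0 * x1 + M 0 1 * x2) ^+ 2 + (M 1 0 * x1 + M 1 1 * x2) ^+ 2) = a * x1 ^+ 2 + 2 * b * x1 * x2 + c * x2 ^+ 2 by rewrite /a /b /c; ring.
apply: form_ge0.
  have : s^-1 <= 1 by rewrite invf_le1; lra.
  rewrite /a /c; lra.
have -> : a * c = s ^+ 2 - s * (M 0 0 ^+ 2 + M 0 1 ^+ 2 + M 1 0 ^+ 2 + M 1 1 ^+ 2) + (M 0 0 * M 1 1 - M 0 1 * M 1 0) ^+ 2 + b ^+ 2.
  by rewrite /a /b /c; ring.
rewrite dM expr1n -subr_ge0.
have -> : s ^+ 2 - s * (M 0 0 ^+ 2 + M 0 1 ^+ 2 + M 1 0 ^+ 2 + M 1 1 ^+ 2) + 1 + b ^+ 2 - b ^+ 2 = s * (s + s^-1 - (M 0 0 ^+ 2 + M 0 1 ^+ 2 + M 1 0 ^+ 2 + M 1 1 ^+ 2)).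
  by field.
apply: mulr_ge0; lra.
Qed.

Lemma F_of_bnd M s : \det M = 1 -> 0 < s -> bnd M s -> F2 M <= s + s^-1.
Proof.
rewrite det2 /F2 => dM hs hb.
set a := s - (M 0 0 ^+ 2 + M 1 0 ^+ 2); set c := s - (M 0 1 ^+ 2 + M 1 1 ^+ 2).
set b := - (M 0 0 * M 0 1 + M 1 0 * M 1 1).
have fE x1 x2 : 0 <= a * x1 ^+ 2 + 2 * b * x1 * x2 + c * x2 ^+ 2.
  have -> : a * x1 ^+ 2 + 2 * b * x1 * x2 + c * x2 ^+ 2 = s * (x1 ^+ 2 + x2 ^+ 2) - ((M 0 0 * x1 + M 0 1 * x2) ^+ 2 + (M 1 0 * x1 + M 1 1 * x2) ^+ 2) by rewrite /a /b /c; ring.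
  by rewrite subr_ge0.
have ha : 0 <= a by have := fE 1 0; rewrite expr1n expr0n /=; lra.
have hc : 0 <= c by have := fE 0 1; rewrite expr1n expr0n /=; lra.
have hdet : b ^+ 2 <= a * c.
  have h1 := fE b (- a); have h2 := fE c (- b).
  have h3 : 0 <= (a + c) * (a * c - b ^+ 2) by move: h1 h2; nra.
  case: (ltrP 0 (a + c)) => h.
    by move: h3; rewrite pmulr_rge0 // subr_ge0.
  have a0 : a = 0 by lra.
  have c0 : c = 0 by lra.
  have := fE 1 1; have := fE 1 (-1); rewrite a0 c0; nra.
have e : a * c = s ^+ 2 - s * (M 0 0 ^+ 2 + M 0 1 ^+ 2 + M 1 0 ^+ 2 + M 1 1 ^+ 2) + (M 0 0 * M 1 1 - M 0 1 * M 1 0) ^+ 2 + b ^+ 2.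
  by rewrite /a /b /c; ring.
rewrite e dM expr1n in hdet.
have : s * (M 0 0 ^+ 2 + M 0 1 ^+ 2 + M 1 0 ^+ 2 + M 1 1 ^+ 2) <= s * (s + s^-1).
  have -> : s * (s + s^-1) = s ^+ 2 + 1 by field; rewrite gt_eqF.
  lra.
by rewrite ler_pM2l.
Qed.

Lemma tr_sq M : \det M = 1 -> \tr M ^+ 2 <= F2 M + 2.
Proof.
rewrite det2 tr2 /F2 => dM; rewrite -subr_ge0.
have -> : M 0 0 ^+ 2 + M 0 1 ^+ 2 + M 1 0 ^+ 2 + M 1 1 ^+ 2 + 2 - (M 0 0 + M 1 1) ^+ 2 = (M 0 1 - M 1 0) ^+ 2 + 2 * (1 - (M 0 0 * M 1 1 - M 0 1 * M 1 0)).
  by ring.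
by rewrite dM subrr mulr0 addr0 sqr_ge0.
Qed.

Lemma phi_cat A B (u w : word) : phi A B (u ++ w) = phi A B u *m phi A B w.
Proof. elim: u => [|x u IH] /=; first by rewrite mul1mx. by rewrite IH mulmxA. Qed.

Lemma phi_conj A B A' B' P (w : word) : A *m P = P *m A' -> B *m P = P *m B' ->
  phi A B w *m P = P *m phi A' B' w.
Proof.
move=> hA hB; elim: w => [|x w IH] /=; first by rewrite mul1mx mulmx1.
by rewrite -mulmxA IH mulmxA; case: x; rewrite ?hA ?hB mulmxA.
Qed.

Lemma tr_conj A B A' B' P (w : word) : P \in unitmx -> A *m P = P *m A' -> B *m P = P *m B' ->
  wtr A B w = wtr A' B' w.
Proof.
move=> uP hA hB; rewrite /wtr.
have e : phi A B w = P *m phi A' B' w *m invmx P by rewrite -(phi_conj w hA hB) mulmxK.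
by rewrite e mxtrace_mulC mulKmx.
Qed.

Lemma det_phi A B (w : word) : \det A = 1 -> \det B = 1 -> \det (phi A B w) = 1.
Proof.
move=> dA dB; elim: w => [|x w IH] /=; first by rewrite det1.
by rewrite det_mulmx IH mulr1; case: x.
Qed.

Lemma bnd_phi A B s (w : word) : 0 <= s -> bnd A s -> bnd B s -> bnd (phi A B w) (s ^+ size w).
Proof.
move=> s0 hA hB; elim: w => [|x w IH] /=; first by rewrite expr0; exact: bnd1.
rewrite exprS; apply: bnd_mul => //; by case: x.
Qed.

Lemma wpowS (w : word) n : wpow w n.+1 = w ++ wpow w n. Proof. by []. Qed.
Lemma size_wpow (w : word) n : size (wpow w n) = (size w * n)%N.
Proof. elim: n => [|n IH]; first by rewrite muln0. by rewrite wpowS size_cat IH mulnS. Qed.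

Lemma CH2 X : X *m X = \tr X *: X - (\det X) *: 1%:M.
Proof. apply: mx2E; rewrite !mul2E !mxE tr2 det2 /=; ring. Qed.

Lemma tr_pow A B (m : R) : \det (A *m B) = 1 -> \tr (A *m B) = m + m^-1 -> m != 0 ->
  forall n, wtr A B (wpow [:: la; lb] n) = m ^+ n + m^-1 ^+ n.
Proof.
move=> d t m0.
set X := A *m B.
have hS n : phi A B (wpow [:: la; lb] n.+1) = X *m phi A B (wpow [:: la; lb] n).
  by rewrite wpowS phi_cat /= mulmx1.
suff h : forall n, wtr A B (wpow [:: la; lb] n) = m ^+ n + m^-1 ^+ n /\
                   wtr A B (wpow [:: la; lb] n.+1) = m ^+ n.+1 + m^-1 ^+ n.+1.
  by move=> n; case: (h n).
elim => [|n [IH1 IH2]].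
  rewrite /wtr hS /= mulmx1 !expr0 !expr1 -t mxtrace1; split => //; ring.
split => //; rewrite /wtr hS hS mulmxA CH2 mulmxBl -!scalemxAl d scale1r mul1mx raddfB /= mxtraceZ.
rewrite -hS; rewrite /wtr in IH1 IH2; rewrite IH1 IH2 t !exprS; field; exact: m0.
Qed.

Fixpoint alt (c : bool) (n : nat) : word := if n is n'.+1 then c :: alt (~~ c) n' else [::].

Lemma alt_split (u : word) : (exists U1 U2 c, u = U1 ++ [:: c; c] ++ U2) \/ (exists c, u = alt c (size u)).
Proof.
elim: u => [|x u [[U1 [U2 [c e]]]|[c e]]]; first by right; exists false.
- by left; exists (x :: U1), U2, c; rewrite e.
- case: u e => [|y u'] e; first by right; exists x.
  case: (eqVneq x y) => [<-|nxy]; first by left; exists [::], u', x.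
  right; exists x => /=; congr cons.
  have cy : c = y by case: e.
  have -> : ~~ x = y by move: nxy; case: (x); case: (y).
  by rewrite -cy; move: e => /= [_ <-].
Qed.

Lemma alt_even c k : alt c k.*2 = wpow [:: c; ~~ c] k.
Proof.
elim: k c => [|k IH] c //=.
by rewrite negbK IH.
Qed.

Lemma alt_odd c k : alt c k.*2.+1 = wpow [:: c; ~~ c] k ++ [:: c].
Proof.
elim: k c => [|k IH] c //=.
by rewrite negbK -(IH c).
Qed.

Lemma sq_split (u : word) : u <> [::] ->
  (exists U1 U2 c, u ++ u = U1 ++ [:: c; c] ++ U2) \/
  (exists k, (0 < k)%N /\ (u = wpow [:: la; lb] k \/ u = wpow [:: lb; la] k)).
Proof.
move=> un.
case: (alt_split u) => [[U1 [U2 [c e]]]|[c e]].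
  by left; exists U1, (U2 ++ u), c; rewrite {1}e -!catA.
move: (odd_double_half (size u)); set k := (size u)./2; case: odd => /= hs.
  have e2 : u = alt c (1 + k.*2) by rewrite hs.
  have e3 : u = c :: alt (~~ c) k.*2 by rewrite e2.
  rewrite add1n alt_odd in e2.
  left; exists (wpow [:: c; ~~ c] k), (alt (~~ c) k.*2), c.
  by rewrite {1}e2 e3 -catA.
have e2 : u = alt c k.*2 by rewrite -[k.*2]add0n hs.
right; exists k; split.
  rewrite lt0n; apply/negP => /eqP h; apply: un.
  by move: e2; rewrite h.
rewrite e2 alt_even; case: c {e e2}; [right|left] => //.
Qed.

Lemma root_F (F : R) : 2 <= F -> 1 <= (F + Num.sqrt (F ^+ 2 - 4)) / 2 /\
   (F + Num.sqrt (F ^+ 2 - 4)) / 2 + ((F + Num.sqrt (F ^+ 2 - 4)) / 2)^-1 = F.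
Proof.
move=> hF.
have h4 : 0 <= F ^+ 2 - 4 by nra.
have r0 := sqrtr_ge0 (F ^+ 2 - 4).
have r2 := sqr_sqrtr h4.
set r := Num.sqrt _ in r0 r2 *.
split; first lra.
have s0 : (F + r) / 2 != 0 by rewrite gt_eqF //; lra.
apply: (mulfI s0); rewrite mulrDr mulfV //.
rewrite -[F + r]/(F + r); nra.
Qed.

Lemma h_mono (a b : R) : 1 <= a -> a < b -> a + a^-1 < b + b^-1.
Proof.
move=> ha hab.
have a0 : a != 0 by rewrite gt_eqF //; lra.
have b0 : b != 0 by rewrite gt_eqF //; lra.
rewrite -subr_gt0.
have -> : b + b^-1 - (a + a^-1) = (b - a) * (a * b - 1) / (a * b) by field; rewrite a0 b0.
apply: divr_gt0; [apply: mulr_gt0|]; nra.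
Qed.

Lemma partII (l c : R) (u : word) : 0 < l -> 0 < c -> u <> [::] ->
  wtr (A1m l c) (B1m l c) (wpow u 2) <= wtr (A1m l c) (B1m l c) (wpow [:: la; lb] (size u)) /\
  (wtr (A1m l c) (B1m l c) (wpow [:: la; lb] (size u)) <= wtr (A1m l c) (B1m l c) (wpow u 2) ->
     exists k, (0 < k)%N /\ (u = wpow [:: la; lb] k \/ u = wpow [:: lb; la] k)).
Proof.
move=> l0 c0 un.
set A := A1m l c; set B := B1m l c.
have ln0 : l != 0 by rewrite gt_eqF.
have dA : \det A = 1 by rewrite det2 /A /A1m !mxE /=; field.
have dB : \det B = 1 by rewrite det2 /B /B1m !mxE /=; field.
set z := l ^+ 2 + c ^+ 2 + l^-1 ^+ 2.
have FA : F2 A = z by rewrite /F2 /A /A1m !mxE /= /z; ring.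
have FB : F2 B = z by rewrite /F2 /B /B1m !mxE /= /z; ring.
have ll : l ^+ 2 + l^-1 ^+ 2 >= 2.
  have : 0 <= (l - l^-1) ^+ 2 by exact: sqr_ge0.
  have -> : (l - l^-1) ^+ 2 = l ^+ 2 + l^-1 ^+ 2 - 2 by rewrite sqrrB mulfV //; ring.
  lra.
have z2 : 2 < z.
  have : 0 < c ^+ 2 by rewrite exprn_gt0.
  rewrite /z; lra.
have [mu1 muE] := root_F (ltW z2).
set mu := (z + _) / 2 in mu1 muE.
have mu0 : 0 < mu by lra.
have mun0 : mu != 0 by rewrite gt_eqF.
have mugt1 : 1 < mu.
  rewrite lt_neqAle mu1 andbT; apply/negP => /eqP e.
  by move: muE; rewrite -e invr1 => h; lra.
have bA : bnd A mu by apply: bnd_of_F => //; rewrite FA muE.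
have bB : bnd B mu by apply: bnd_of_F => //; rewrite FB muE.
have trAB : \tr (A *m B) = mu + mu^-1.
  by rewrite muE tr2 !mul2E /A /B /A1m /B1m !mxE /= /z; ring.
have dAB : \det (A *m B) = 1 by rewrite det_mulmx dA dB mulr1.
have hT := tr_pow dAB trAB mun0 (size u).
set n := size u in hT *.
have n0 : (0 < n)%N by rewrite lt0n size_eq0; apply/eqP.
set W := phi A B (wpow u 2).
have dW : \det W = 1 by exact: det_phi.
have sW : size (wpow u 2) = (n * 2)%N by rewrite size_wpow.
have bW : bnd W (mu ^+ (n * 2)) by rewrite -sW; apply: bnd_phi => //; lra.
set a := mu ^+ n.
have a1 : 1 < a by rewrite /a exprn_egt1 // -lt0n.
have a0 : a != 0 by rewrite gt_eqF //; lra.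
have sig : mu ^+ (n * 2) = a ^+ 2 by rewrite exprM.
have TT : (mu ^+ n + mu^-1 ^+ n) ^+ 2 = a ^+ 2 + (a ^+ 2)^-1 + 2.
  by rewrite exprVn -/a; field.
have T0 : 0 <= mu ^+ n + mu^-1 ^+ n by rewrite exprVn -/a; have := invr_gt0 a; rewrite exprn_gt0 //; lra.
have trW2 : \tr W ^+ 2 <= (mu ^+ n + mu^-1 ^+ n) ^+ 2.
  rewrite TT; apply: (le_trans (tr_sq dW)); rewrite lerD2r -sig.
  by apply: F_of_bnd => //; rewrite exprn_gt0.
rewrite hT /wtr -/W; split; first by nra.
move=> hge.
case: (sq_split un) => // [[U1 [U2 [c' e]]]].
exfalso.
set G := F2 (A *m A).
have GA : G = l ^+ 4 + c ^+ 2 * (l + l^-1) ^+ 2 + l^-1 ^+ 4.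
  by rewrite /G /F2 !mul2E /A /A1m !mxE /=; field.
have GB : F2 (B *m B) = G.
  by rewrite GA /F2 !mul2E /B /B1m !mxE /=; field.
have G2 : 2 <= G.
  have : 0 <= (l ^+ 2 - l^-1 ^+ 2) ^+ 2 by exact: sqr_ge0.
  have -> : (l ^+ 2 - l^-1 ^+ 2) ^+ 2 = l ^+ 4 + l^-1 ^+ 4 - 2 by rewrite sqrrB -!exprM /= -exprMn mulfV // expr1n; ring.
  rewrite GA; have := sqr_ge0 (c * (l + l^-1)); rewrite exprMn; lra.
have Gz : G < z ^+ 2 - 2.
  rewrite GA /z -subr_gt0.
  have -> : (l ^+ 2 + c ^+ 2 + l^-1 ^+ 2) ^+ 2 - 2 - (l ^+ 4 + c ^+ 2 * (l + l^-1) ^+ 2 + l^-1 ^+ 4) = c ^+ 2 * (l - l^-1) ^+ 2 + c ^+ 4.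
    by field.
  have := sqr_ge0 (c * (l - l^-1)); rewrite exprMn.
  have : 0 < c ^+ 4 by rewrite exprn_gt0.
  lra.
have [s1 sE] := root_F G2.
set s2 := (G + _) / 2 in s1 sE.
have mu2 : mu ^+ 2 + (mu ^+ 2)^-1 = z ^+ 2 - 2.
  by rewrite -muE; field.
have s2lt : s2 < mu ^+ 2.
  rewrite ltNge; apply/negP; rewrite le_eqVlt => /orP[/eqP h|h].
    by move: Gz; rewrite -sE -h mu2 ltxx.
  have mu21 : 1 <= mu ^+ 2 by apply: exprn_ege1; lra.
  have := h_mono mu21 h; rewrite mu2 sE; lra.
have bC : bnd (phi A B [:: c'; c']) s2.
  case: c' e => e /=; rewrite mulmx1; apply: bnd_of_F => //.
  all: rewrite ?GB ?sE ?det_mulmx ?dA ?dB ?mulr1 //.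
have eW : W = phi A B U1 *m (phi A B [:: c'; c'] *m phi A B U2).
  by rewrite /W /wpow /= cats0 e !phi_cat.
have sz : (size U1 + size U2 + 2 = n * 2)%N.
  by rewrite -sW /wpow /= cats0 e !size_cat /= addn2 !addnS.
set s' := mu ^+ size U1 * (s2 * mu ^+ size U2).
have bW' : bnd W s'.
  rewrite eW; apply: bnd_mul; first by rewrite exprn_ge0 //; lra.
    by apply: bnd_phi => //; lra.
  apply: bnd_mul; [lra | exact: bC |]; by apply: bnd_phi => //; lra.
have s'lt : s' < a ^+ 2.
  rewrite -sig -sz !exprD /s'.
  have p1 : 0 < mu ^+ size U1 by rewrite exprn_gt0.
  have p2 : 0 < mu ^+ size U2 by rewrite exprn_gt0.
  have -> : mu ^+ size U1 * (s2 * mu ^+ size U2) = (mu ^+ size U1 * mu ^+ size U2) * s2 by ring.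
  by rewrite ltr_pM2l ?mulr_gt0.
have a21 : 1 < a ^+ 2 by rewrite exprn_egt1.
have [s'' [h1 [h2 h3]]] : exists s'', 1 <= s'' /\ s'' < a ^+ 2 /\ bnd W s''.
  case: (lerP 1 s') => hs; first by exists s'.
  exists 1; split => //; split => //; apply: bnd_le bW'; lra.
have H1 : F2 W <= s'' + s''^-1 by apply: F_of_bnd => //; lra.
have H2 := h_mono h1 h2.
have H3 := tr_sq dW.
have H4 : (mu ^+ n + mu^-1 ^+ n) ^+ 2 <= \tr W ^+ 2.
  by rewrite !expr2; apply: ler_pM.
rewrite TT in H4; lra.
Qed.
End S.

Lemma lex_irr (s : word) : lex_lt s s = false.
Proof. elim: s => [|x s IH] //=; rewrite IH eqxx /=; by case: x. Qed.

Lemma wpow_comm (s : word) k : wpow s k ++ s = s ++ wpow s k.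
Proof. elim: k => [|k IH] /=; first by rewrite cats0. by rewrite -catA IH. Qed.

Lemma notlyn (s : word) k : size s = 2%N -> (1 < k)%N -> ~ lyndon (wpow s k).
Proof.
move=> hs hk.
have e : rot 2 (wpow s k) = wpow s k.
  case: k hk => [|k] // _; rewrite wpowS -{1}hs rot_size_cat wpow_comm //.
case=> _ h.
have h2 : (0 < 2 < size (wpow s k))%N by rewrite size_wpow hs; apply/andP; split => //; lia.
by move: (h 2%N h2); rewrite e lex_irr.
Qed.

Unset Implicit Arguments.
Set Strict Implicit.

Theorem theorem3p6 (R : realType) (A B : 'M[R]_2) :
  \det A = 1 -> \det B = 1 ->
  A *m B != B *m A ->
  \tr A = \tr B -> 2 <= \tr A ->
  well_oriented A B ->
  forall S : word -> Prop,
    complete_optimal A B S <-> (forall w, S w <-> w = [:: la; lb]).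
Proof.
move=> dA dB _ tAB t2 wo S.
have htr := wo_tr dA dB tAB wo.
have z : \tr A ^+ 2 - 2 < \tr (A *m B).
  have := tr_ABi A dB; rewrite -tAB -expr2; lra.
case: (wo) => [[[p1 [q1 [aA [aB _]]]] [p2 [q2 [rA [rB _]]]]] _].
have [l [hl eA]] := attr_ev aA.
have [m [hm eB]] := rep_ev rB.
have l0 : l != 0 by rewrite gt_eqF //; lra.
have m0 : m != 0 by rewrite gt_eqF //; case/andP: hm.
have tA := tr_eig dA l0 eA.
have tB := tr_eig dB m0 eB.
have im : 1 <= m^-1 by case/andP: hm => h h'; rewrite invf_ge1.
have elm : l = m^-1 by apply: eq_l => //; rewrite -tA invrK addrC -tB.
have em : m = l^-1 by rewrite elm invrK.
rewrite em in eB.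
rewrite tA in z.
have [P [c [uP [c0 [hAP hBP]]]]] := nf dA dB hl eA eB z.
have conj w := tr_conj w uP hAP hBP.
have lp : 0 < l by lra.
have K u : u <> [::] -> wle A B u [:: la; lb] /\
   (wle A B [:: la; lb] u -> exists k, (0 < k)%N /\ (u = wpow [:: la; lb] k \/ u = wpow [:: lb; la] k)).
  by move=> un; rewrite /wle !conj; exact: partII.
have max_ab : maximal A B [:: la; lb] by split => // u un; case: (K u un).
have max_char w : maximal A B w -> exists k, (0 < k)%N /\ (w = wpow [:: la; lb] k \/ w = wpow [:: lb; la] k).
  by case=> wn h; apply: (K w wn).2; apply: h.
have lyn_ab : lyndon [:: la; lb] by split => // k; case: k => [|[|k]] //=.
have lyn_max w : maximal A B w -> lyndon w -> w = [:: la; lb].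
  move=> mw lw; have [k [k0 [e|e]]] := max_char w mw.
    case: k k0 e => [|[|k]] k0 e //.
    by exfalso; apply: (@notlyn [:: la; lb] k.+2) => //; rewrite -e.
  case: k k0 e => [|[|k]] k0 e //.
    by exfalso; case: lw => _ /(_ 1%N); rewrite e; move/(_ isT).
  by exfalso; apply: (@notlyn [:: lb; la] k.+2) => //; rewrite -e.
split.
  move=> [h1 h2] w; split.
    by move=> Sw; have [mw lw] := h1 w Sw; exact: lyn_max.
  move=> ->; have [u [r [k [Su _]]]] := h2 _ max_ab.
  have [mu lu] := h1 u Su; by rewrite -(lyn_max u mu lu).
move=> hS; split.
  by move=> w /hS ->; split.
move=> w mw; have [k [k0 [e|e]]] := max_char w mw.
  by exists [:: la; lb], 0%N, k; split; [apply/hS | split].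
by exists [:: la; lb], 1%N, k; split; [apply/hS | split].
Qed.
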